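(* Let $K, G : \mathrm{Per}(\mathbb{R}) \to \mathrm{Per}(\mathbb{R})$ be continuous mappings which can be approximated smoothly by the parameterized families $K_N$ and $G_N$, respectively (in the sense defined in the context). Let $\lambda \geq 0$ be any real number. Define $KG$, $K+G$, $\lambda K$ by $((KG)(\rho))(x) = (K(\rho))(x)\,(G(\rho))(x)$, $((K+G)(\rho))(x) = (K(\rho))(x) + (G(\rho))(x)$, $((\lambda K)(\rho))(x) = \lambda (K(\rho))(x)$ for all $x \in \mathbb{R}$, $\rho \in \mathrm{Per}(\mathbb{R})$. Then $KG$, $K+G$, $\lambda K$ can be approximated smoothly by the parameterized families $K_N G_N$, $K_N + G_N$, $\lambda K_N$, respectively (where $(K_NG_N)(\rho)=K_N(\rho)G_N(\rho)$ etc. for $\rho\in\mathbb{R}^N$).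
   Context: $\mathbb{R}_+ = [0,+\infty)$. $\mathrm{Per}(\mathbb{R})$ denotes the set of continuous, positive functions $\rho:\mathbb{R}\to(0,+\infty)$ that are periodic with period $1$; continuity of maps on $\mathrm{Per}(\mathbb{R})$ is with respect to the uniform (sup) metric. For $y \in \mathbb{R}^N$, $|y|_\infty = \max_i |y_i|$; for $x,y\in\mathbb{R}^N$, $x \le y$ means componentwise; $1_N = (1,\dots,1)^\top$. For $\rho = (\rho_0,\dots,\rho_{N-1})^\top \in \mathbb{R}^N$ and $i=1,\dots,N-1$, $\rho^{(i)} = (\rho_i,\dots,\rho_{N-1},\rho_0,\dots,\rho_{i-1})^\top$, $\rho^{(0)}=\rho$, and in general $\rho^{(k)}$ is obtained by applying the cyclic left shift $k$ times. For $h=1/N$ and $\rho\in\mathbb{R}^N$, $P_N\rho \in \mathrm{Per}(\mathbb{R})$ (for positive $\rho$) is the $1$-periodic function with $(P_N\rho)(x) = h^{-1}\rho_i((i+1)h - x) + h^{-1}\rho_{i+1}(x - ih)$ for $x \in [ih,(i+1)h]$, $i=0,\dots,N-2$, and $(P_N\rho)(x) = h^{-1}\rho_{N-1}(1-x) + h^{-1}\rho_0(x+h-1)$ for $x\in[(N-1)h,1]$ (piecewise linear interpolation of the values $\rho_i$ at the nodes $ih$). Definition (smooth approximation). Let $K:\mathrm{Per}(\mathbb{R})\to\mathrm{Per}(\mathbb{R})$ be continuous and suppose there is $v_{\max}>0$ with $0 \le (K(\rho))(x) \le v_{\max}$ for all $x\in\mathbb{R}$, $\rho \in \mathrm{Per}(\mathbb{R})$.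 A family of mappings $K_N:\mathbb{R}^N\to\mathbb{R}_+$, indexed by integers $N>2$, smoothly approximates $K$ if there exist constants $L,c,C,S\ge 0$ and non-decreasing functions $\gamma,\Gamma,W:\mathbb{R}_+\to\mathbb{R}_+$ such that $K_N(\rho)\le v_{\max}$ for all $\rho\in\mathbb{R}_+^N$, and for all $N>2$, $0<\rho_{\min}\le\rho_{\max}$, $i=0,\dots,N-1$ and all $\rho=(\rho_0,\dots,\rho_{N-1})^\top,\tilde\rho \in\mathbb{R}_+^N$ with $\rho_{\min}1_N\le\rho\le\rho_{\max}1_N$, $\rho_{\min}1_N\le\tilde\rho\le\rho_{\max}1_N$, writing $h=1/N$, $y = h^{-1}(\rho^{(1)}-\rho)$, $\varphi = h^{-2}(\rho^{(2)}-2\rho^{(1)}+\rho)$: (i) $|K_N(\rho)-K_N(\tilde\rho)| \le L|\rho-\tilde\rho|_\infty$; (ii) $|K_N(\rho)-K_N(\rho^{(1)})-K_N(\tilde\rho)+K_N(\tilde\rho^{(1)})| \le (h|\rho-\tilde\rho|_\infty + h^2)\Gamma(\rho_{\max})$; (iii) $-ch(\rho_{\max}-\rho_0) \le K_N(\rho^{(1)})-K_N(\rho) \le ch(\rho_0-\rho_{\min})$; (iv) $|2K_N(\rho^{(1)})-K_N(\rho)-K_N(\rho^{(2)})| \le h^2(\gamma(\rho_{\max}) + C|y|_\infty)$; (v) $|3K_N(\rho^{(1)})+K_N(\rho^{(3)})-K_N(\rho)-3K_N(\rho^{(2)})| \le h^3(W(\rho_{\max}+|y|_\infty) + C|\varphi|_\infty)$;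 (vi) $|(K(P_N\rho))(ih) - K_N(\rho^{(i)})| \le hS\rho_{\max}$. *)

(* Defs.v *)
From HB Require Import structures.
From mathcomp Require Import all_boot all_order all_algebra.
From mathcomp Require Import all_classical all_reals topology normedtype.
Set Implicit Arguments. Unset Strict Implicit. Unset Printing Implicit Defensive.
Import Order.TTheory GRing.Theory Num.Theory numFieldNormedType.Exports.
Local Open Scope ring_scope.

Section Defs.
Variable R : realType.

Definition Per (rho : R -> R) : Prop :=
  continuous rho /\ (forall x, rho (x + 1) = rho x) /\ (forall x, 0 < rho x).

Definition supn (N : nat) (y : 'I_N -> R) : R := \big[Num.max/0]_(i < N) `|y i|.

(* cyclic left shift: rho^(1)_i = rho_(i+1 mod N) *)
Definition shift (N : nat) (rho : 'I_N -> R) : 'I_N -> R := fun i => rho (ordS i).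
Definition shiftk (N : nat) (k : nat) (rho : 'I_N -> R) : 'I_N -> R := iter k (@shift N) rho.

(* rho_(k mod N) for an integer index k (0 if N = 0, never used) *)
Definition rho_at (N : nat) (rho : 'I_N -> R) (k : int) : R :=
  if [pick i : 'I_N | (nat_of_ord i)%:Z == (k %% N%:Z)%Z] is Some i then rho i else 0.

(* P_N rho: 1-periodic piecewise linear interpolation of rho_i at nodes i/N:
   on [i h, (i+1) h], value h^-1 rho_i ((i+1)h - x) + h^-1 rho_(i+1) (x - i h). *)
Definition PN (N : nat) (rho : 'I_N -> R) : R -> R := fun x =>
  let t := N%:R * x in
  let k := Num.floor t in
  let fr := t - k%:~R in
  rho_at rho k * (1 - fr) + rho_at rho (k + 1) * fr.

(* nondecreasing functions R_+ -> R_+ (represented on R, constrained on [0,oo)) *)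
Definition nondec_nonneg (f : R -> R) : Prop :=
  (forall x, 0 <= x -> 0 <= f x) /\ (forall x y, 0 <= x -> x <= y -> f x <= f y).

Definition sup_continuous_on_Per (K : (R -> R) -> (R -> R)) : Prop :=
  forall rho, Per rho -> forall eps, 0 < eps -> exists2 delta, 0 < delta &
    forall sigma, Per sigma -> (forall x, `|rho x - sigma x| <= delta) ->
      forall x, `|K rho x - K sigma x| <= eps.

Definition smoothly_approximates (K : (R -> R) -> (R -> R))
    (KN : forall N : nat, ('I_N -> R) -> R) : Prop :=
  (forall rho, Per rho -> continuous (K rho) /\ forall x, K rho (x + 1) = K rho x) /\
  sup_continuous_on_Per K /\
  (forall N (rho : 'I_N -> R), (2 < N)%N -> 0 <= KN N rho) /\
  exists2 vmax, 0 < vmax &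
  (forall rho, Per rho -> forall x, 0 <= K rho x <= vmax) /\
  (forall N (rho : 'I_N -> R), (2 < N)%N -> (forall i, 0 <= rho i) -> KN N rho <= vmax) /\
  exists L c C S : R, [/\ 0 <= L, 0 <= c, 0 <= C & 0 <= S] /\
  exists gam Gam W : R -> R,
    [/\ nondec_nonneg gam, nondec_nonneg Gam & nondec_nonneg W] /\
  forall (N : nat) (rmin rmax : R) (rho rho' : 'I_N -> R),
    (2 < N)%N -> 0 < rmin -> rmin <= rmax ->
    (forall i, rmin <= rho i <= rmax) -> (forall i, rmin <= rho' i <= rmax) ->
    let h := (N%:R)^-1 in
    let y : 'I_N -> R := fun i => h^-1 * (shift rho i - rho i) in
    let phi : 'I_N -> R := fun i =>
      h^-2 * (shiftk 2 rho i - 2 * shift rho i + rho i) in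
    let dist := supn (fun i => rho i - rho' i) in
    let rho0 := rho_at rho 0 in
    (
      `|KN N rho - KN N rho'| <= L * dist) /\ (
      `|KN N rho - KN N (shift rho) - KN N rho' + KN N (shift rho')|
        <= (h * dist + h ^+ 2) * Gam rmax) /\ (
      - (c * h * (rmax - rho0)) <= KN N (shift rho) - KN N rho
        /\ KN N (shift rho) - KN N rho <= c * h * (rho0 - rmin)) /\ (
      `|2 * KN N (shift rho) - KN N rho - KN N (shiftk 2 rho)|
        <= h ^+ 2 * (gam rmax + C * supn y)) /\ (
      `|3 * KN N (shift rho) + KN N (shiftk 3 rho) - KN N rho - 3 * KN N (shiftk 2 rho)|
        <= h ^+ 3 * (W (rmax + supn y) + C * supn phi)) /\ (
      forall i : 'I_N,
        `|K (PN rho) ((nat_of_ord i)%:R * h) - KN N (shiftk i rho)| <= h * S * rmax).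

End Defs.

(* Main.v *)
Require Import Defs.
From HB Require Import structures.
From mathcomp Require Import all_boot all_order all_algebra.
From mathcomp Require Import all_classical all_reals topology normedtype.
From mathcomp Require Import ring lra.
Import Order.TTheory GRing.Theory Num.Theory numFieldNormedType.Exports.
Local Open Scope ring_scope.
Lemma eqle (R : realType) (x y : R) : x = y -> x <= y.
Proof. by move->. Qed.

Lemma minl (R : realType) (a b : R) : Num.min a b <= a.
Proof. by rewrite ge_min lexx. Qed.
Lemma minr (R : realType) (a b : R) : Num.min a b <= b.
Proof. by rewrite ge_min lexx orbT. Qed.

Section PNsec.
Variable R : realType.

Lemma lip_cont (f : R -> R) M : 0 < M ->
  (forall s t, `|f s - f t| <= M * `|s - t|) -> continuous f.
Proof.
move=> M0 Hf x; apply/cvgrPdist_lt => e e0.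
have eM : 0 < e / M by rewrite divr_gt0.
near=> y.
apply: (le_lt_trans (Hf _ _)).
rewrite -ltr_pdivlMl // mulrC.
near: y.
by apply: (@cvgr_dist_lt _ _ _ _ _ id) => //; exact: cvg_id.
Unshelve. all: by end_near.
Qed.

Variable g : int -> R.
Variable B : R.
Hypothesis gB : forall j, `|g j| <= B.

Definition Fg (t : R) := g (Num.floor t) * (1 - (t - (Num.floor t)%:~R))
  + g (Num.floor t + 1) * (t - (Num.floor t)%:~R).

Lemma Fg_itv k t : k%:~R <= t <= (k + 1)%:~R ->
  Fg t = g k * ((k + 1)%:~R - t) + g (k + 1) * (t - k%:~R).
Proof.
case/andP => h1 h2; rewrite /Fg.
case: (ltP t (k+1)%:~R) => h3.
  have -> : Num.floor t = k by apply: floor_def; rewrite h1 h3.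
  by rewrite intrD; congr (_ + _); congr (_ * _); lra.
have et : t = (k+1)%:~R by apply/eqP; rewrite eq_le h2 h3.
rewrite et intrKfloor subrr !(mulr0, subr0, mulr1, addr0, add0r).
rewrite intrD; ring.
Qed.

Lemma Fg_lip_itv k s t : k%:~R <= s <= (k + 1)%:~R -> k%:~R <= t <= (k + 1)%:~R ->
  `|Fg t - Fg s| <= 2 * B * `|t - s|.
Proof.
move=> hs ht; rewrite (Fg_itv _ _ hs) (Fg_itv _ _ ht).
have -> : g k * ((k + 1)%:~R - t) + g (k + 1) * (t - k%:~R) -
   (g k * ((k + 1)%:~R - s) + g (k + 1) * (s - k%:~R)) = (g (k+1) - g k) * (t - s)
  by ring.
rewrite normrM ler_wpM2r //.
apply: (le_trans (ler_normB _ _)); have := gB (k+1); have := gB k; lra.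
Qed.

Lemma B0 : 0 <= B. Proof. exact: le_trans (normr_ge0 _) (gB 0). Qed.

Lemma Fg_lip_n n : forall s t, s <= t -> t < (Num.floor s + n%:Z)%:~R ->
  `|Fg t - Fg s| <= 2 * B * (t - s).
Proof.
elim: n => [|n IH] s t st.
  rewrite addr0 => h; have := floor_le s; lra.
move=> ht.
have hs : (Num.floor s)%:~R <= s <= (Num.floor s + 1)%:~R.
  by rewrite floor_le /= ltW // floorD1_gt.
case: (leP t (Num.floor s + 1)%:~R) => h1.
  rewrite -(ger0_norm (x := t - s)); last by lra.
  apply: (Fg_lip_itv (Num.floor s)) => //; apply/andP; split; have := floor_le s; lra.
set p := Num.floor s + 1.
have fp : Num.floor (p%:~R : R) = p by rewrite intrKfloor.
have hp : p%:~R <= t by rewrite /p; lra.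
have := IH p%:~R t hp; rewrite fp => /(_ _).
have -> : (p + n%:Z)%:~R = (Num.floor s + n.+1%:Z)%:~R :> R.
  by rewrite /p -addrA; congr (_%:~R); rewrite addrC -addrA; congr (_ + _); rewrite addrC -[n.+1]addn1 PoszD.
move=> /(_ ht) H1.
have H2 : `|Fg p%:~R - Fg s| <= 2 * B * (p%:~R - s).
  rewrite -(ger0_norm (x := p%:~R - s)); last by rewrite /p; have := floorD1_gt s; lra.
  apply: (Fg_lip_itv (Num.floor s)) => //; apply/andP; split; rewrite /p ?intrD; have := floor_le s; have := floorD1_gt s; rewrite ?intrD; lra.
have -> : Fg t - Fg s = (Fg t - Fg p%:~R) + (Fg p%:~R - Fg s) by ring.
apply: (le_trans (ler_normD _ _)); apply: le_trans (lerD H1 H2) _; rewrite -mulrDr; apply: eqle; congr (_ * _); ring.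
Qed.

Lemma Fg_lip s t : `|Fg t - Fg s| <= 2 * B * `|t - s|.
Proof.
wlog st : s t / s <= t.
  move=> W; case: (leP s t) => h; first exact: W.
  by rewrite distrC (distrC t); apply: W; lra.
rewrite (ger0_norm (x := t - s)); last by lra.
apply: (Fg_lip_n (`|Num.floor t - Num.floor s|%N + 1)%N) => //.
apply: (lt_le_trans (floorD1_gt t)); rewrite ler_int PoszD addrA lerD2r.
rewrite -lerBlDl; exact: ler_norm.
Qed.

End PNsec.
Arguments Fg {R}.
Arguments lip_cont {R}.
Arguments Fg_lip {R g B}.

Section Aux.
Variable R : realType.

Lemma supn_ge0 N (y : 'I_N -> R) : 0 <= supn y.
Proof.
rewrite /supn; apply: (big_ind (fun x => 0 <= x)) => // x z hx hz.
by rewrite le_max hx.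
Qed.
Arguments supn_ge0 {N}.

Lemma le_supn N (y : 'I_N -> R) i : `|y i| <= supn y.
Proof. by rewrite /supn (bigD1 i) //= le_max lexx. Qed.

Lemma supn_le N (y : 'I_N -> R) M : 0 <= M -> (forall i, `|y i| <= M) -> supn y <= M.
Proof.
move=> M0 H; rewrite /supn; apply: (big_ind (fun x => x <= M)) => // x z hx hz.
by rewrite ge_max hx hz.
Qed.

Lemma supn_shift N (y : 'I_N -> R) : supn (fun i => y (ordS i)) <= supn y.
Proof. apply: supn_le; [exact: supn_ge0 | move=> i; exact: le_supn]. Qed.
Arguments supn_shift {N}.

Lemma rho_at_in N (rho : 'I_N -> R) k : (0 < N)%N -> exists i, rho_at rho k = rho i.
Proof.
move=> N0; rewrite /rho_at; case: pickP => [i _|H]; first by exists i.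
exfalso.
have NZ : (N%:Z != 0) by rewrite eqz_nat -lt0n.
have hm : 0 <= (k %% N%:Z)%Z by rewrite modz_ge0.
have hl : (k %% N%:Z < N%:Z)%Z by rewrite ltz_pmod.
have hl' : (`|(k %% N%:Z)%Z| < N)%N by rewrite -ltz_nat gez0_abs.
have := H (Ordinal hl') => /=; by rewrite gez0_abs // eqxx.
Qed.
Arguments rho_at_in {N}.

Lemma rho_atD N (rho : 'I_N -> R) k : rho_at rho (k + N%:Z) = rho_at rho k.
Proof. by rewrite /rho_at modzDr. Qed.
Arguments rho_atD {N}.

Lemma PN_Per N (rho : 'I_N -> R) : (0 < N)%N -> (forall i, 0 < rho i) -> Per (PN rho).
Proof.
move=> N0 rpos.
have E : forall x, PN rho x = Fg (rho_at rho) (N%:R * x) by [].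
have gB : forall k, `|rho_at rho k| <= supn rho.
  by move=> k; have [i ->] := rho_at_in rho k N0; exact: le_supn.
have B0 := supn_ge0 rho.
split; [|split].
- have M1 : 0 <= 2 * supn rho by lra.
  have M0 := mulr_ge0 M1 (ler0n R N).
  apply: (lip_cont _ (2 * supn rho * N%:R + 1)); first lra.
  move=> s t; rewrite !E.
  apply: le_trans (Fg_lip gB _ _) _.
  rewrite -mulrBr normrM (ger0_norm (ler0n _ _)) mulrA.
  rewrite ler_wpM2r //; lra.
- move=> x; rewrite !E mulrDr mulr1 /Fg.
  set t := N%:R * x.
  have -> : (N%:R : R) = (N%:Z)%:~R by [].
  rewrite floorDrz ?intr_int // intrKfloor (rho_atD rho (Num.floor t)) (addrAC (Num.floor t) (N%:Z) 1) (rho_atD rho (Num.floor t + 1)) intrD.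
  by congr (_ + _); congr (_ * _); ring.
- move=> x; rewrite E /Fg.
  set t := N%:R * x.
  have [i ->] := rho_at_in rho (Num.floor t) N0.
  have [j ->] := rho_at_in rho (Num.floor t + 1) N0.
  have h1 := floor_le t; have h2 := floorD1_gt t.
  rewrite intrD in h2.
  have p1 : 0 < rho i * (1 - (t - (Num.floor t)%:~R)) by rewrite mulr_gt0 //; lra.
  have p2 : 0 <= rho j * (t - (Num.floor t)%:~R) by apply: mulr_ge0; [exact: ltW | lra].
  by apply: (lt_le_trans p1); rewrite lerDl.
Qed.

Lemma shift_bnd N (rho : 'I_N -> R) a b : (forall i, a <= rho i <= b) ->
  forall i : 'I_N, a <= Defs.shift rho i <= b.
Proof. by move=> H i; exact: H. Qed.
Arguments shift_bnd {N rho a b}.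

Lemma shiftk_bnd N (rho : 'I_N -> R) a b k : (forall i, a <= rho i <= b) ->
  forall i : 'I_N, a <= shiftk k rho i <= b.
Proof. move=> H; elim: k => [|k IH] //= i; exact: IH. Qed.
Arguments shiftk_bnd {N rho a b}.

Lemma rho_at_bnd N (rho : 'I_N -> R) a b k : (0 < N)%N -> (forall i, a <= rho i <= b) ->
  a <= rho_at rho k <= b.
Proof. by move=> N0 H; have [i ->] := rho_at_in rho k N0. Qed.
Arguments rho_at_bnd {N rho a b}.

Definition nn := @nondec_nonneg R.

Lemma nn_add f g : nn f -> nn g -> nn (fun x => f x + g x).
Proof.
move=> [f0 f1] [g0 g1]; split=> [x x0|x y x0 xy]; first by rewrite addr_ge0 ?f0 ?g0.
by rewrite lerD ?f1 ?g1.
Qed.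
Arguments nn_add {f g}.

Lemma nn_scale a f : 0 <= a -> nn f -> nn (fun x => a * f x).
Proof.
move=> a0 [f0 f1]; split=> [x x0|x y x0 xy]; first by rewrite mulr_ge0 ?f0.
by rewrite ler_wpM2l ?f1.
Qed.
Arguments nn_scale {a f}.

Lemma nn_mul f g : nn f -> nn g -> nn (fun x => f x * g x).
Proof.
move=> [f0 f1] [g0 g1]; split=> [x x0|x y x0 xy]; first by rewrite mulr_ge0 ?f0 ?g0.
rewrite ler_pM ?f0 ?g0 ?f1 ?g1 //.
Qed.
Arguments nn_mul {f g}.

Lemma nn_id : nn id.
Proof. by split=> // x y. Qed.

Lemma nn_cst a : 0 <= a -> nn (fun _ => a).
Proof. by split. Qed.


Lemma nD2 (x y z a b c : R) : `|x| <= a -> `|y| <= b -> z = x + y -> a + b <= c -> `|z| <= c.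
Proof. move=> h1 h2 -> h3; apply: le_trans (ler_normD _ _) _; lra. Qed.
Arguments nD2 {x y z a b c}.

Lemma sa_sum (K G : (R -> R) -> (R -> R)) (KN GN : forall N : nat, ('I_N -> R) -> R) : smoothly_approximates K KN -> smoothly_approximates G GN ->
  smoothly_approximates (fun rho x => K rho x + G rho x) (fun N rho => KN N rho + GN N rho).
Proof.
move=> [HKc [HKsc [HKpos [vK vK0 [HKb [HKNb [LK [cK [CK [SK [[LK0 cK0 CK0 SK0]
  [gK [GK [WK [[gKn GKn WKn] HK]]]]]]]]]]]]]]].
move=> [HGc [HGsc [HGpos [vG vG0 [HGb [HGNb [LG [cG [CG [SG [[LG0 cG0 CG0 SG0]
  [gG [GG [WG [[gGn GGn WGn] HG]]]]]]]]]]]]]]].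
split.
  move=> rho Pr; have [c1 p1] := HKc rho Pr; have [c2 p2] := HGc rho Pr.
  split; last by move=> x; rewrite p1 p2.
  by move=> x; exact: (continuousD (c1 x) (c2 x)).
split.
  move=> rho Pr e e0.
  have [d1 d10 H1] := HKsc rho Pr (e/2) ltac:(lra).
  have [d2 d20 H2] := HGsc rho Pr (e/2) ltac:(lra).
  exists (Num.min d1 d2); first by rewrite lt_min d10 d20.
  move=> sigma Ps Hd x.
  have := H1 sigma Ps (fun x => le_trans (Hd x) (minl _ _ _)) x.
  have := H2 sigma Ps (fun x => le_trans (Hd x) (minr _ _ _)) x.
  move=> A B; apply: (nD2 B A); [ring | lra].
split; first by move=> N rho HN; rewrite addr_ge0 ?HKpos ?HGpos.
exists (vK + vG); first lra.
split.
  by move=> rho Pr x; have := HKb rho Pr x; have := HGb rho Pr x; case/andP=> ? ? /andP[] ? ?;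
    apply/andP; split; lra.
split.
  by move=> N rho HN Hr; have := HKNb N rho HN Hr; have := HGNb N rho HN Hr; lra.
exists (LK + LG), (cK + cG), (CK + CG), (SK + SG).
split; first by split; lra.
exists (fun x => gK x + gG x), (fun x => GK x + GG x), (fun x => WK x + WG x).
split; first by split; apply: nn_add.
move=> N rmin rmax rho rho' HN Hmin Hle Hr Hr'.
have := HK N rmin rmax rho rho' HN Hmin Hle Hr Hr'.
have := HG N rmin rmax rho rho' HN Hmin Hle Hr Hr'.
cbv zeta.
move=> [G1 [G2 [[G3 G3'] [G4 [G5 G6]]]]] [K1 [K2 [[K3 K3'] [K4 [K5 K6]]]]].
split; [|split; [|split; [|split; [|split]]]].
- apply: (nD2 K1 G1); [ring | apply: eqle; ring].
- apply: (nD2 K2 G2); [ring | apply: eqle; ring].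
- split; lra.
- apply: (nD2 K4 G4); [ring | apply: eqle; ring].
- apply: (nD2 K5 G5); [ring | apply: eqle; ring].
- move=> i; apply: (nD2 (K6 i) (G6 i)); [ring | apply: eqle; ring].
Qed.
Lemma nS (x z a c lam : R) : `|x| <= a -> 0 <= lam -> z = lam * x -> lam * a <= c -> `|z| <= c.
Proof. move=> h1 l0 -> h3; rewrite normrM ger0_norm //; apply: le_trans h3; exact: ler_wpM2l. Qed.
Arguments nS {x z a c lam}.

Lemma sa_scale (K : (R -> R) -> (R -> R)) (KN : forall N : nat, ('I_N -> R) -> R) lam : 0 <= lam -> smoothly_approximates K KN ->
  smoothly_approximates (fun rho x => lam * K rho x) (fun N rho => lam * KN N rho).
Proof.
move=> lam0.
move=> [HKc [HKsc [HKpos [vK vK0 [HKb [HKNb [LK [cK [CK [SK [[LK0 cK0 CK0 SK0]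
  [gK [GK [WK [[gKn GKn WKn] HK]]]]]]]]]]]]]]].
split.
  move=> rho Pr; have [c1 p1] := HKc rho Pr.
  split; last by move=> x; rewrite p1.
  move=> x; have c0 : {for x, continuous (fun _ : R => lam)} by apply: cvg_cst.
  exact: (continuousM c0 (c1 x)).
split.
  move=> rho Pr e e0.
  have l1 : 0 < lam + 1 by lra.
  have [d1 d10 H1] := HKsc rho Pr (e/(lam + 1)) ltac:(by rewrite divr_gt0).
  exists d1 => // sigma Ps Hd x.
  apply: (nS (H1 sigma Ps Hd x) lam0); first ring.
  have -> : lam * (e / (lam + 1)) = e - e / (lam + 1) by field; rewrite gt_eqF.
  have : 0 <= e / (lam + 1) by rewrite divr_ge0 // ltW.
  lra.
split; first by move=> N rho HN; rewrite mulr_ge0 ?HKpos.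
exists (lam * vK + 1); first by have := mulr_ge0 lam0 (ltW vK0); lra.
split.
  move=> rho Pr x; have /andP[a1 a2] := HKb rho Pr x; apply/andP; split.
    exact: mulr_ge0.
  by have := ler_wpM2l lam0 a2; lra.
split.
  by move=> N rho HN Hr; have := ler_wpM2l lam0 (HKNb N rho HN Hr); lra.
exists (lam * LK), (lam * cK), (lam * CK), (lam * SK).
split; first by split; apply: mulr_ge0.
exists (fun x => lam * gK x), (fun x => lam * GK x), (fun x => lam * WK x).
split; first by split; apply: nn_scale.
move=> N rmin rmax rho rho' HN Hmin Hle Hr Hr'.
have := HK N rmin rmax rho rho' HN Hmin Hle Hr Hr'.
cbv zeta.
move=> [K1 [K2 [[K3 K3'] [K4 [K5 K6]]]]].
split; [|split; [|split; [|split; [|split]]]].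
- apply: (nS K1 lam0); [ring | apply: eqle; ring].
- apply: (nS K2 lam0); [ring | apply: eqle; ring].
- have := ler_wpM2l lam0 K3; have := ler_wpM2l lam0 K3'.
  split; lra.
- apply: (nS K4 lam0); [ring | apply: eqle; ring].
- apply: (nS K5 lam0); [ring | apply: eqle; ring].
- move=> i; apply: (nS (K6 i) lam0); [ring | apply: eqle; ring].
Qed.
Lemma nM (x y a b : R) : `|x| <= a -> `|y| <= b -> `|x * y| <= a * b.
Proof. move=> h1 h2; rewrite normrM; apply: ler_pM => //. Qed.
Arguments nM {x y a b}.

Lemma nD4 (x1 x2 x3 x4 z a1 a2 a3 a4 c : R) : `|x1| <= a1 -> `|x2| <= a2 ->
  `|x3| <= a3 -> `|x4| <= a4 -> z = x1 + x2 + x3 + x4 -> a1 + a2 + a3 + a4 <= c -> `|z| <= c.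
Proof.
move=> h1 h2 h3 h4 -> h5; apply: le_trans h5.
apply: le_trans (ler_normD _ _) _; apply: lerD => //.
apply: le_trans (ler_normD _ _) _; apply: lerD => //.
apply: le_trans (ler_normD _ _) _; apply: lerD => //.
Qed.
Arguments nD4 {x1 x2 x3 x4 z a1 a2 a3 a4 c}.

Lemma nD3 (x1 x2 x3 z a1 a2 a3 c : R) : `|x1| <= a1 -> `|x2| <= a2 ->
  `|x3| <= a3 -> z = x1 + x2 + x3 -> a1 + a2 + a3 <= c -> `|z| <= c.
Proof.
move=> h1 h2 h3 -> h5; apply: le_trans h5.
apply: le_trans (ler_normD _ _) _; apply: lerD => //.
apply: le_trans (ler_normD _ _) _; apply: lerD => //.
Qed.
Arguments nD3 {x1 x2 x3 z a1 a2 a3 c}.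

Lemma nb (x v : R) : 0 <= x <= v -> `|x| <= v.
Proof. by case/andP=> h1 h2; rewrite ger0_norm. Qed.
Arguments nb {x v}.

Lemma n3 (x u : R) : `|x| <= u -> `|-3 * x| <= 3 * u.
Proof. move=> h; rewrite normrM normrN (ger0_norm (x := 3)) //; apply: ler_wpM2l => //. Qed.
Arguments n3 {x u}.

Lemma d3 (x c h rmin rmax r0 : R) : -(c * h * (rmax - r0)) <= x /\ x <= c * h * (r0 - rmin) ->
  0 < rmin -> rmin <= r0 <= rmax -> 0 <= c -> 0 <= h -> `|x| <= c * h * rmax.
Proof.
move=> [h1 h2] m0 /andP[r1 r2] c0 h0.
have p1 : 0 <= c * h * rmin by rewrite !mulr_ge0 // ltW.
have p2 : 0 <= c * h * r0 by rewrite !mulr_ge0 //; lra.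
have p3 : 0 <= c * h * (rmax - r0) by rewrite !mulr_ge0 //; lra.
rewrite ler_norml; apply/andP; split; lra.
Qed.
Arguments d3 {x c h rmin rmax r0}.
Lemma prodb (x g u v vg : R) : -u <= x /\ x <= v -> 0 <= g <= vg -> 0 <= u -> 0 <= v ->
  -(u * vg) <= x * g /\ x * g <= v * vg.
Proof.
move=> [h1 h2] /andP[g1 g2] u0 v0.
have p1 : 0 <= (x + u) * g by rewrite mulr_ge0 //; lra.
have p2 : 0 <= u * (vg - g) by rewrite mulr_ge0 //; lra.
have p3 : 0 <= (v - x) * g by rewrite mulr_ge0 //; lra.
have p4 : 0 <= v * (vg - g) by rewrite mulr_ge0 //; lra.
split; lra.
Qed.
Arguments prodb {x g u v vg}.

Lemma sa_prod (K G : (R -> R) -> (R -> R)) (KN GN : forall N : nat, ('I_N -> R) -> R) : smoothly_approximates K KN -> smoothly_approximates G GN ->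
  smoothly_approximates (fun rho x => K rho x * G rho x) (fun N rho => KN N rho * GN N rho).
Proof.
move=> [HKc [HKsc [HKpos [vK vK0 [HKb [HKNb [LK [cK [CK [SK [[LK0 cK0 CK0 SK0]
  [gK [GK [WK [[gKn GKn WKn] HK]]]]]]]]]]]]]]].
move=> [HGc [HGsc [HGpos [vG vG0 [HGb [HGNb [LG [cG [CG [SG [[LG0 cG0 CG0 SG0]
  [gG [GG [WG [[gGn GGn WGn] HG]]]]]]]]]]]]]]].
split.
  move=> rho Pr; have [c1 p1] := HKc rho Pr; have [c2 p2] := HGc rho Pr.
  split; last by move=> x; rewrite p1 p2.
  by move=> x; exact: (continuousM (c1 x) (c2 x)).
split.
  move=> rho Pr e e0.
  have [d1 d10 H1] := HKsc rho Pr (e/(2 * vG)) ltac:(by rewrite divr_gt0 // mulr_gt0).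
  have [d2 d20 H2] := HGsc rho Pr (e/(2 * vK)) ltac:(by rewrite divr_gt0 // mulr_gt0).
  exists (Num.min d1 d2); first by rewrite lt_min d10 d20.
  move=> sigma Ps Hd x.
  have A := H1 sigma Ps (fun x => le_trans (Hd x) (minl _ _ _)) x.
  have B := H2 sigma Ps (fun x => le_trans (Hd x) (minr _ _ _)) x.
  have Gb := nb (HGb rho Pr x); have Kb := nb (HKb sigma Ps x).
  apply: (nD2 (nM A Gb) (nM Kb B)); first ring.
  apply: eqle; field; rewrite ?(gt_eqF vG0) ?(gt_eqF vK0) //.
split; first by move=> N rho HN; rewrite mulr_ge0 ?HKpos ?HGpos.
exists (vK * vG); first by rewrite mulr_gt0.
split.
  move=> rho Pr x; have /andP[a1 a2] := HKb rho Pr x; have /andP[b1 b2] := HGb rho Pr x.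
  by rewrite mulr_ge0 //= ler_pM.
split.
  by move=> N rho HN Hr; rewrite ler_pM ?HKpos ?HGpos ?HKNb ?HGNb.
exists (vK * LG + vG * LK), (vG * cK + vK * cG), (vG * CK + vK * CG), (vG * SK + vK * SG).
have vK0' := ltW vK0; have vG0' := ltW vG0.
split; first by split; rewrite addr_ge0 // mulr_ge0.
exists (fun r => vG * gK r + vK * gG r + 2 * cK * cG * (r * r)),
  (fun r => vG * GK r + vK * GG r + (cK * LG + LK * cG) * r),
  (fun r => vK * WG r + vG * WK r + 3 * cK * (r * (gG r + CG * r)) + 3 * cG * (r * (gK r + CK * r))).
split; first split.
- exact: (nn_add (nn_add (nn_scale vG0' gKn) (nn_scale vK0' gGn))
     (nn_scale (ltac:(rewrite !mulr_ge0 //) : 0 <= 2 * cK * cG) (nn_mul nn_id nn_id))).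
- exact: (nn_add (nn_add (nn_scale vG0' GKn) (nn_scale vK0' GGn))
     (nn_scale (ltac:(rewrite addr_ge0 // mulr_ge0 //) : 0 <= cK * LG + LK * cG) nn_id)).
- exact: (nn_add (nn_add (nn_add (nn_scale vK0' WGn) (nn_scale vG0' WKn))
     (nn_scale (ltac:(rewrite !mulr_ge0 //) : 0 <= 3 * cK)
        (nn_mul nn_id (nn_add gGn (nn_scale CG0 nn_id)))))
     (nn_scale (ltac:(rewrite !mulr_ge0 //) : 0 <= 3 * cG)
        (nn_mul nn_id (nn_add gKn (nn_scale CK0 nn_id))))).
move=> N rmin rmax rho rho' HN Hmin Hle Hr Hr'.
have N0 : (0 < N)%N by apply: leq_trans HN.
have Hr1 := shift_bnd Hr; have Hr1' := shift_bnd Hr'.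
have Hr2 := shiftk_bnd 2 Hr.
have [K1 [K2 [K3 [K4 [K5 K6]]]]] := HK N rmin rmax rho rho' HN Hmin Hle Hr Hr'.
have [G1 [G2 [G3 [G4 [G5 G6]]]]] := HG N rmin rmax rho rho' HN Hmin Hle Hr Hr'.
have [_ [_ [K3b _]]] := HK N rmin rmax rho' rho' HN Hmin Hle Hr' Hr'.
have [_ [_ [G3b _]]] := HG N rmin rmax rho' rho' HN Hmin Hle Hr' Hr'.
have [K1c [_ [K3c [K4c _]]]] := HK N rmin rmax (Defs.shift rho) (Defs.shift rho') HN Hmin Hle Hr1 Hr1'.
have [G1c [_ [G3c [G4c _]]]] := HG N rmin rmax (Defs.shift rho) (Defs.shift rho') HN Hmin Hle Hr1 Hr1'.
have [_ [_ [K3d _]]] := HK N rmin rmax (shiftk 2 rho) (shiftk 2 rho) HN Hmin Hle Hr2 Hr2.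
have [_ [_ [G3d _]]] := HG N rmin rmax (shiftk 2 rho) (shiftk 2 rho) HN Hmin Hle Hr2 Hr2.
cbv zeta in *.
set h := (N%:R)^-1 in K1 K2 K3 K4 K5 K6 G1 G2 G3 G4 G5 G6 K3b G3b K1c G1c K3c G3c K4c G4c K3d G3d *.
have h0 : 0 <= h by rewrite invr_ge0.
have rb := fun (r : 'I_N -> R) (H : forall i, rmin <= r i <= rmax) => rho_at_bnd 0 N0 H.
have dK := fun x r0 (H : -(cK * h * (rmax - r0)) <= x /\ x <= cK * h * (r0 - rmin))
  (Hr0 : rmin <= r0 <= rmax) => d3 H Hmin Hr0 cK0 h0.
have dG := fun x r0 (H : -(cG * h * (rmax - r0)) <= x /\ x <= cG * h * (r0 - rmin))
  (Hr0 : rmin <= r0 <= rmax) => d3 H Hmin Hr0 cG0 h0.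
have DK0 := dK _ _ K3 (rb _ Hr).
have DG0 := dG _ _ G3 (rb _ Hr).
have DK0' := dK _ _ K3b (rb _ Hr').
have DG0' := dG _ _ G3b (rb _ Hr').
have DK1 := dK _ _ K3c (rb _ Hr1).
have DG1 := dG _ _ G3c (rb _ Hr1).
have DK2 := dK _ _ K3d (rb _ Hr2).
have DG2 := dG _ _ G3d (rb _ Hr2).
have pos := fun (r : 'I_N -> R) (H : forall i, rmin <= r i <= rmax) => (fun i => ltW (lt_le_trans Hmin (proj1 (andP (H i))))) : forall i, 0 <= r i.
have bK := fun (r : 'I_N -> R) (H : forall i, rmin <= r i <= rmax) =>
  nb (ltac:(by rewrite HKpos // HKNb //; exact: pos) : 0 <= KN N r <= vK).
have bG := fun (r : 'I_N -> R) (H : forall i, rmin <= r i <= rmax) =>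
  nb (ltac:(by rewrite HGpos // HGNb //; exact: pos) : 0 <= GN N r <= vG).

have Hr3 := shiftk_bnd 3 Hr.
have G1' : `|GN N rho' - GN N rho| <= LG * supn (fun i => rho i - rho' i) by rewrite distrC.
have sd : supn (fun i => Defs.shift rho i - Defs.shift rho' i) <= supn (fun i => rho i - rho' i)
  := supn_shift (fun i => rho i - rho' i).
have K1c' : `|KN N (Defs.shift rho) - KN N (Defs.shift rho')| <= LK * supn (fun i => rho i - rho' i).
  by apply: le_trans K1c _; apply: ler_wpM2l.
have DG0n : `|GN N rho - GN N (Defs.shift rho)| <= cG * h * rmax by rewrite distrC.
have DK0n : `|KN N rho - KN N (Defs.shift rho)| <= cK * h * rmax by rewrite distrC.
have DK1' : `|KN N (Defs.shift rho) - KN N (shiftk 2 rho)| <= cK * h * rmax.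
  by rewrite distrC; exact: DK1.
have DG2' : `|GN N (shiftk 3 rho) - GN N (shiftk 2 rho)| <= cG * h * rmax := DG2.
have dpos : 0 <= supn (fun i => rho i - rho' i) := supn_ge0 _.
have rmax0 : 0 <= rmax by apply: le_trans Hle; exact: ltW.
set Y := supn (fun i => h^-1 * (Defs.shift rho i - rho i)) in K4 G4 K5 G5 *.
have Y0 : 0 <= Y := supn_ge0 _.
have G4s : `|2 * GN N (shiftk 2 rho) - GN N (Defs.shift rho) - GN N (shiftk 3 rho)|
    <= h ^+ 2 * (gG rmax + CG * Y).
  apply: le_trans G4c _; apply: ler_wpM2l; first exact: exprn_ge0.
  rewrite lerD2l; apply: ler_wpM2l => //.
  exact: (supn_shift (fun i => h^-1 * (Defs.shift rho i - rho i))).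
split; [|split; [|split; [|split; [|split]]]].
- apply: (nD2 (nM K1 (bG _ Hr)) (nM (bK _ Hr') G1)); first ring.
  apply: eqle; ring.
- apply: (nD4 (nM K2 (bG _ Hr)) (nM DK0' G1') (nM K1c' DG0n) (nM (bK _ Hr1') G2)); first ring.
  have : 0 <= h ^+ 2 * (cK * LG + LK * cG) * rmax.
    by rewrite !mulr_ge0 ?exprn_ge0 // addr_ge0 // mulr_ge0.
  lra.
- have [r0l r0u] := andP (rb _ Hr).
  have u0 : 0 <= rmax - rho_at rho 0 by rewrite subr_ge0.
  have v0 : 0 <= rho_at rho 0 - rmin by rewrite subr_ge0.
  have [u1 u2] := prodb K3 (ltac:(rewrite HGpos // HGNb //; exact: pos) : 0 <= GN N (Defs.shift rho) <= vG)
    (mulr_ge0 (mulr_ge0 cK0 h0) u0) (mulr_ge0 (mulr_ge0 cK0 h0) v0).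
  have [w1 w2] := prodb G3 (ltac:(rewrite HKpos // HKNb //; exact: pos) : 0 <= KN N rho <= vK)
    (mulr_ge0 (mulr_ge0 cG0 h0) u0) (mulr_ge0 (mulr_ge0 cG0 h0) v0).
  clear -u1 u2 w1 w2; split; lra.
- have Da : `|KN N rho - KN N (shiftk 2 rho)| <= cK * h * rmax + cK * h * rmax.
    by apply: (nD2 DK0n DK1'); first ring.
  apply: (nD3 (nM (bG _ Hr1) K4) (nM (bK _ Hr2) G4) (nM Da DG0)); first ring.
  apply: eqle; ring.
- have s1 : rmax <= rmax + Y by rewrite lerDl.
  have s2 : Y <= rmax + Y by rewrite lerDr.
  have q1 : h ^+ 3 * (3 * cK) * (rmax * (gG rmax + CG * Y))
      <= h ^+ 3 * (3 * cK) * ((rmax + Y) * (gG (rmax + Y) + CG * (rmax + Y))).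
    apply: ler_wpM2l; first by rewrite !mulr_ge0 ?exprn_ge0.
    apply: ler_pM => //; first by rewrite addr_ge0 ?(proj1 gGn) // mulr_ge0.
    apply: lerD; first by apply: (proj2 gGn).
    by apply: ler_wpM2l.
  have q2 : h ^+ 3 * (3 * cG) * (rmax * (gK rmax + CK * Y))
      <= h ^+ 3 * (3 * cG) * ((rmax + Y) * (gK (rmax + Y) + CK * (rmax + Y))).
    apply: ler_wpM2l; first by rewrite !mulr_ge0 ?exprn_ge0.
    apply: ler_pM => //; first by rewrite addr_ge0 ?(proj1 gKn) // mulr_ge0.
    apply: lerD; first by apply: (proj2 gKn).
    by apply: ler_wpM2l.
  apply: (nD4 (nM (bK _ Hr) G5) (nM (n3 DK0) G4s) (nM (n3 K4) DG2') (nM K5 (bG _ Hr3)));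
    first ring.
  clear -q1 q2 h0; lra.
- move=> i.
  have Pp := PN_Per N rho N0 (fun i => lt_le_trans Hmin (proj1 (andP (Hr i)))).
  apply: (nD2 (nM (K6 i) (nb (HGb _ Pp _))) (nM (bK _ (shiftk_bnd i Hr)) (G6 i))); first ring.
  apply: eqle; ring.
Qed.

End Aux.

Theorem lemma2p2 (R : realType) (K G : (R -> R) -> (R -> R))
    (KN GN : forall N : nat, ('I_N -> R) -> R) (lam : R) :
  (forall rho, Per rho -> Per (K rho)) ->
  (forall rho, Per rho -> Per (G rho)) ->
  smoothly_approximates K KN ->
  smoothly_approximates G GN ->
  0 <= lam ->
  [/\ smoothly_approximates (fun rho x => K rho x * G rho x)
        (fun N rho => KN N rho * GN N rho),
      smoothly_approximates (fun rho x => K rho x + G rho x)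
        (fun N rho => KN N rho + GN N rho) &
      smoothly_approximates (fun rho x => lam * K rho x)
        (fun N rho => lam * KN N rho)].
Proof.
move=> _ _ HK HG l0; split.
- exact: (sa_prod _ _ _ _ _ HK HG).
- exact: (sa_sum _ _ _ _ _ HK HG).
- exact: (sa_scale _ _ _ _ l0 HK).
Qed.
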